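(* Let $\mathcal{H}$ be a $3$-graph and let $\mathcal{H}_t$ be a $3$-graph obtained from $\mathcal{H}$ by applying Algorithm 1 (described in the context). Let $T\subseteq V(\mathcal{H}_t)$ contain exactly one vertex from each equivalence class of $\mathcal{H}_t$. Then (a) $|\mathcal{H}_t|\ge|\mathcal{H}|$; and (b) $\mathcal{H}_t[T]$ is $2$-covered and $\mathcal{H}_t$ is a blowup of $\mathcal{H}_t[T]$.
   Context: For a vertex $v$ of a $3$-graph $\mathcal{H}$, its link is $L(v)=\{A\in\binom{V(\mathcal{H})}{2}: A\cup\{v\}\in\mathcal{H}\}$ and its degree is $d(v)=|L(v)|$. Two vertices are adjacent if some edge contains both. Two non-adjacent vertices $u,v$ are equivalent if $L(u)=L(v)$ (every vertex is equivalent to itself); $C_v$ denotes the equivalence class of $v$. Algorithm 1 (symmetrization): as long as $\mathcal{H}$ has two non-adjacent non-equivalent vertices, pick such $u,v$ with $d(u)\ge d(v)$, delete all vertices of $C_v$ (with their edges) and add $|C_v|$ new vertices, each a copy of $u$ (i.e. for every edge $E\ni u$ and each new vertex $v'$, add $E\setminus\{u\}\cup\{v'\}$), labelling the new vertices by the labels of $C_v$. Stop when no pair of non-adjacent non-equivalent vertices remains; the result is $\mathcal{H}_t$. A $3$-graph is $2$-covered if every pair of its vertices lies in some edge. A blowup of a $3$-graph $\mathcal{T}$ on $[s]$ replaces vertex $i$ by a set of size $t_i\ge1$ (pairwise disjoint) and each edge by the complete $3$-partite $3$-graph on the corresponding sets. *)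

(* Defs.v *)
From mathcomp Require Import all_boot.
Set Implicit Arguments. Unset Strict Implicit. Unset Printing Implicit Defensive.

Section Hyper.
Variable V : finType.
Implicit Types (H G : {set {set V}}) (T : {set V}) (u v w : V).

Definition is3graph H : Prop := forall E, E \in H -> #|E| = 3.

Definition link H v : {set {set V}} :=
  [set A : {set V} | (#|A| == 2) && ((A :|: [set v]) \in H)].

Definition deg H v : nat := #|link H v|.

Definition adj H u v : bool := [exists E in H, (u \in E) && (v \in E)].

Definition equiv H u v : bool :=
  (u == v) || (~~ adj H u v && (link H u == link H v)).

Definition eclass H v : {set V} := [set w | equiv H v w].

(* One step of Algorithm 1 with chosen u, v: delete the vertices of C_v
   (and their edges), and re-add them (keeping their labels) as copies of u. *)
Definition sym_step H u v : {set {set V}} :=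
  [set E in H | [disjoint E & eclass H v]] :|:
  [set (E :\ u) :|: [set w] | E in [set E in H | u \in E], w in eclass H v].

Definition alg_step H H' : Prop :=
  exists u v, [/\ ~~ adj H u v, ~~ equiv H u v, deg H v <= deg H u
               & H' = sym_step H u v].

Definition alg_terminal H : Prop := forall u v, adj H u v || equiv H u v.

Inductive alg_reach : {set {set V}} -> {set {set V}} -> Prop :=
| alg_refl H : alg_reach H H
| alg_next H H' H'' : alg_step H H' -> alg_reach H' H'' -> alg_reach H H''.

Definition alg_output H Ht : Prop := alg_reach H Ht /\ alg_terminal Ht.

Definition induced H T : {set {set V}} := [set E in H | E \subset T].

Definition two_covered G T : Prop :=
  forall x y, x \in T -> y \in T -> x != y ->
    exists2 E, E \in G & (x \in E) && (y \in E).

(* H (on vertex set V) is a blowup of G (on vertex set T): vertex t in T is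
   replaced by the nonempty part f^-1(t), and each edge by the complete
   3-partite 3-graph on the corresponding parts. *)
Definition blowup_of H G T : Prop :=
  exists f : V -> V,
    [/\ forall x, f x \in T,
        forall t, t \in T -> exists x, f x = t
      & H = [set E : {set V} | [&& #|E| == 3, #|f @: E| == 3 & f @: E \in G]]].

End Hyper.

(* Main.v *)
Require Import Defs.
From mathcomp Require Import all_boot.

Notation eqv := Defs.equiv.
Set Implicit Arguments. Unset Strict Implicit. Unset Printing Implicit Defensive.

Lemma adjC (V : finType) (H : {set {set V}}) x y : adj H x y = adj H y x.
Proof.
by apply/existsP/existsP => -[E /andP[hE /andP[a b]]]; exists E; rewrite hE a b.
Qed.

Lemma equiv_sym (V : finType) (H : {set {set V}}) x y : eqv H x y = eqv H y x.
Proof. by rewrite /eqv /Defs.equiv eq_sym adjC (eq_sym (link H x)). Qed.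

Lemma equiv_refl (V : finType) (H : {set {set V}}) x : eqv H x x.
Proof. by rewrite /eqv /Defs.equiv eqxx. Qed.

Lemma equiv_adj (V : finType) (H : {set {set V}}) x y :
  eqv H x y -> adj H x y -> x = y.
Proof. by rewrite /eqv /Defs.equiv => /orP[/eqP//|/andP[/negP h _]] /h. Qed.

Lemma equiv_link (V : finType) (H : {set {set V}}) x y :
  eqv H x y -> link H x = link H y.
Proof. by case/orP => [/eqP->|/andP[_ /eqP]]. Qed.

Lemma adj_in (V : finType) (H : {set {set V}}) x y E :
  E \in H -> x \in E -> y \in E -> adj H x y.
Proof. by move=> hE hx hy; apply/existsP; exists E; rewrite hE hx hy. Qed.

Lemma link_rep (V : finType) (H : {set {set V}}) v w E :
  is3graph H -> link H v = link H w -> E \in H -> v \in E ->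
  (E :\ v) :|: [set w] \in H.
Proof.
move=> h3 hl hE vE.
have : E :\ v \in link H v.
  rewrite inE setUC setD1K // hE andbT.
  by move: (cardsD1 v E); rewrite vE (h3 _ hE) add1n => -[<-].
by rewrite hl inE => /andP[_].
Qed.

Lemma equiv_rep (V : finType) (H : {set {set V}}) x y E :
  is3graph H -> eqv H x y -> E \in H -> x \in E ->
  (E :\ x) :|: [set y] \in H.
Proof.
move=> h3 exy hE xE; case: (eqVneq x y) => [<-|_].
  by rewrite setUC setD1K.
exact: link_rep (equiv_link exy) hE xE.
Qed.

Lemma equiv_trans (V : finType) (H : {set {set V}}) x y z :
  is3graph H -> eqv H x y -> eqv H y z -> eqv H x z.
Proof.
move=> h3 exy eyz.
have [->|nxz] := eqVneq x z; first exact: equiv_refl.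
rewrite /eqv /Defs.equiv (negbTE nxz) /= (equiv_link exy) (equiv_link eyz) eqxx andbT.
apply/negP => /existsP[E /andP[hE /andP[xE zE]]].
have yz : y = z.
  case: (eqVneq x y) => [exy'|nxy].
    rewrite -exy' in eyz *; exact: equiv_adj eyz (adj_in hE xE zE).
  refine (equiv_adj eyz _); apply: (adj_in (link_rep h3 (equiv_link exy) hE xE));
    by rewrite !inE ?eqxx ?orbT // (eq_sym z x) nxz zE.
have exz : eqv H x z by rewrite -yz.
by rewrite (equiv_adj exz (adj_in hE xE zE)) eqxx in nxz.
Qed.

Lemma step_ok (V : finType) (H : {set {set V}}) u v :
  is3graph H -> ~~ adj H u v -> ~~ eqv H u v -> deg H v <= deg H u ->
  is3graph (sym_step H u v) /\ #|H| <= #|sym_step H u v|.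
Proof.
move=> h3 nadj neq ledeg.
rewrite /sym_step; set C := eclass H v.
have Cl : forall w, w \in C -> link H w = link H v.
  by move=> w; rewrite inE => /equiv_link ->.
have Cna : forall w, w \in C -> ~~ adj H u w.
  move=> w wC; apply/negP => /existsP[E /andP[hE /andP[uE wE]]].
  have uw : u != w.
    by apply/eqP => euw; move: wC; rewrite inE -euw equiv_sym (negbTE neq).
  move/negP: nadj; apply; apply: (adj_in (link_rep h3 (Cl w wC) hE wE));
    by rewrite !inE ?eqxx ?orbT // uw uE.
have CnE : forall w E, w \in C -> E \in H -> u \in E -> w \notin E.
  move=> w E wC hE uE; apply/negP => wE.
  by move/negP: (Cna w wC); apply; apply: adj_in hE uE wE.
set K := [set E in H | [disjoint E & C]].
set Eu := [set E in H | u \in E].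
set N := [set _ | E in Eu, w in C].
split.
  move=> E; rewrite inE => /orP[]; first by rewrite inE => /andP[/h3].
  case/imset2P => E0 w; rewrite inE => /andP[hE0 uE0] wC ->.
  have wn : w \notin E0 :\ u by rewrite inE (negbTE (CnE w E0 wC hE0 uE0)) andbF.
  rewrite setUC cardsU1 wn.
  by have := cardsD1 u E0; rewrite uE0 (h3 _ hE0) add1n => -[<-].
have KH : K \subset H by apply/subsetP => E; rewrite inE => /andP[].
have KN : K :&: N = set0.
  apply/setP => E; rewrite !inE; apply/andP => -[/andP[_ dis]].
  case/imset2P => E0 w _ wC eE; subst E.
  have wE : w \in (E0 :\ u) :|: [set w] by rewrite !inE eqxx orbT.
  by rewrite (disjointFr dis wE) in wC.
rewrite -(cardsID K H) (setIidPr KH) -(addn0 #|_ :|: _|) -(cards0 {set V}) -KN cardsUI leq_add2l.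
have s1 : #|H :\: K| <= #|C| * deg H v.
  rewrite /deg -cardsX.
  apply: leq_trans (leq_imset_card (fun p : V * {set V} => p.2 :|: [set p.1]) _).
  apply: subset_leq_card; apply/subsetP => E; rewrite !inE negb_and => /andP[hd hE].
  rewrite hE /= in hd.
  case: (pickP [pred w | (w \in E) && (w \in C)]) => [w /andP[wE wC]|none]; last first.
    move/negP: hd; case; rewrite disjoint_subset; apply/subsetP => x xE.
    by move: (none x); rewrite /= xE !inE /= => ->.
  apply/imsetP; exists (w, E :\ w); last by rewrite /= setUC setD1K.
  rewrite in_setX wC /= -(Cl w wC) inE setUC setD1K // hE andbT.
  by have := cardsD1 w E; rewrite wE (h3 _ hE) add1n => -[<-].
apply: (leq_trans s1); apply: (leq_trans (leq_mul (leqnn _) ledeg)).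
have s2 : deg H u <= #|Eu|.
  rewrite /deg; apply: leq_trans (leq_imset_card (fun E => E :\ u) Eu).
  apply: subset_leq_card; apply/subsetP => A; rewrite inE => /andP[/eqP c2 hA].
  have uA : u \notin A.
    apply/negP => uA; move: (h3 _ hA).
    have -> : A :|: [set u] = A by apply/setUidPl; rewrite sub1set.
    by rewrite c2.
  apply/imsetP; exists (A :|: [set u]); first by rewrite inE hA !inE eqxx orbT.
  by rewrite setUC setU1K.
apply: (leq_trans (leq_mul (leqnn _) s2)).
rewrite mulnC -cardsX /N curry_imset2X card_in_imset //.
move=> [E w] [E' w']; rewrite !in_setX => /andP[/= hEu wC] /andP[/= hEu' wC'] /=.
move: hEu hEu'; rewrite !inE => /andP[hE uE] /andP[hE' uE'].
have wn := CnE w E wC hE uE; have wn' := CnE w' E' wC' hE' uE'.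
move=> eq.
have ww : w' = w.
  have : w' \in E :\ u :|: [set w] by rewrite eq !inE eqxx orbT.
  by rewrite !inE (negbTE (CnE w' E wC' hE uE)) andbF /= => /eqP.
subst w'.
have : (E :\ u :|: [set w]) :\ w = (E' :\ u :|: [set w]) :\ w by rewrite eq.
rewrite !(setUC _ [set w]) !setU1K ?inE ?(negbTE wn) ?(negbTE wn') ?andbF // => eE.
by rewrite -(setD1K uE) eE setD1K.
Qed.

Lemma reach_ok (V : finType) (H Ht : {set {set V}}) :
  alg_reach H Ht -> is3graph H -> is3graph Ht /\ #|H| <= #|Ht|.
Proof.
elim => [H0 | H0 H1 H2 [u [v [a b c ->]]] _ IH] h3; first by split.
case: (step_ok h3 a b c) => h3' le; case: (IH h3') => ? le'.
by split => //; exact: leq_trans le le'.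
Qed.

Lemma swap1 (V : finType) (G : {set {set V}}) x y (A : {set V}) :
  is3graph G -> x |: A \in G -> eqv G x y -> x \notin A -> y |: A \in G.
Proof.
move=> h3 hE e nA.
have := equiv_rep h3 e hE (setU11 x A).
by rewrite setU1K // setUC.
Qed.

Lemma rep3 (V : finType) (G : {set {set V}}) a b c a' b' c' :
  is3graph G -> [set a; b; c] \in G ->
  eqv G a a' -> eqv G b b' -> eqv G c c' ->
  a != b -> a != c -> b != c -> b != a' -> c != a' -> c != b' ->
  [set a'; b'; c'] \in G.
Proof.
move=> h3 hE ea eb ec ab ac bc ba' ca' cb'.
rewrite -setUA in hE.
have h1 : a' |: ([set b] :|: [set c]) \in G.
  by refine (swap1 h3 hE ea _); rewrite !inE negb_or ab ac.
have h1' : b |: ([set a'] :|: [set c]) \in G.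
  suff -> : b |: ([set a'] :|: [set c]) = a' |: ([set b] :|: [set c]) by []. apply/setP => z; rewrite !inE.
  by do ! case: (_ == _).
have h2 : b' |: ([set a'] :|: [set c]) \in G.
  by refine (swap1 h3 h1' eb _); rewrite !inE negb_or ba' bc.
have h2' : c |: ([set a'] :|: [set b']) \in G.
  suff -> : c |: ([set a'] :|: [set b']) = b' |: ([set a'] :|: [set c]) by []. apply/setP => z; rewrite !inE.
  by do ! case: (_ == _).
have h3' : c' |: ([set a'] :|: [set b']) \in G.
  by refine (swap1 h3 h2' ec _); rewrite !inE negb_or ca' cb'.
suff -> : [set a'; b'; c'] = c' |: ([set a'] :|: [set b']) by []. apply/setP => z; rewrite !inE.
by do ! case: (_ == _).
Qed.

Lemma dec3 (V : finType) (E : {set V}) : #|E| = 3 ->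
  exists a b c, [/\ a != b, a != c, b != c & E = [set a; b; c]].
Proof.
move=> hE; have : 0 < #|E| by rewrite hE.
case/card_gt0P => a aE.
have : #|E :\ a| == 2 by move: (cardsD1 a E); rewrite aE hE add1n => -[<-].
case/cards2P => b [c [bc eq]].
have : b \in E :\ a by rewrite eq !inE eqxx.
have : c \in E :\ a by rewrite eq !inE eqxx orbT.
rewrite !inE => /andP[ca _] /andP[ba _].
exists a, b, c; split; [by rewrite eq_sym | by rewrite eq_sym | by [] |].
by rewrite -setUA -eq setD1K.
Qed.

Lemma card3 (V : finType) (a b c : V) :
  #|[set a; b; c]| = 3 -> [/\ a != b, a != c & b != c].
Proof.
rewrite -setUA cardsU1 cards2 !inE negb_or.
by case: eqP; case: eqP; case: eqP.
Qed.

Lemma card3' (V : finType) (a b c : V) :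
  a != b -> a != c -> b != c -> #|[set a; b; c]| = 3.
Proof.
by move=> ab ac bc; rewrite -setUA cardsU1 cards2 !inE negb_or ab ac bc.
Qed.

Lemma imset3 (V : finType) (f : V -> V) (a b c : V) :
  f @: [set a; b; c] = [set f a; f b; f c].
Proof. by rewrite -!setUA !imsetU1 imset_set1. Qed.

Theorem lemma4p6 (V : finType) (H Ht : {set {set V}}) (T : {set V}) :
  is3graph H ->
  alg_output H Ht ->
  (forall v : V, #|T :&: eclass Ht v| = 1) ->
  #|H| <= #|Ht| /\
  two_covered (induced Ht T) T /\ blowup_of Ht (induced Ht T) T.
Proof.
move=> h3 [reach term] hT.
have [h3t le] := reach_ok reach h3.
split => //.
have etr : forall x y z, eqv Ht x y -> eqv Ht y z -> eqv Ht x z.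
  by move=> x y z; apply: equiv_trans.
have ex : forall x, exists y, T :&: eclass Ht x = [set y].
  by move=> x; apply/cards1P; rewrite hT.
pose f x := odflt x [pick y in T :&: eclass Ht x].
have fP : forall x, f x \in T /\ eqv Ht x (f x).
  move=> x; rewrite /f; case: pickP => [y|none].
    by rewrite !inE => /andP[].
  have [y hy] := ex x; move: (none y); rewrite hy inE eqxx.
  done.
have fU : forall x y, y \in T -> eqv Ht x y -> y = f x.
  move=> x y yT exy; have [a ha] := ex x.
  have : y \in T :&: eclass Ht x by rewrite !inE yT.
  have : f x \in T :&: eclass Ht x by rewrite !inE (fP x).1 (fP x).2.
  by rewrite ha !inE => /eqP-> /eqP->.
have fT : forall t, t \in T -> f t = t.
  by move=> t tT; rewrite -(fU t t tT (equiv_refl _ _)).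
have fE' : forall x y, f x = f y -> eqv Ht x y.
  move=> x y fxy; apply: (etr _ _ _ (fP x).2); rewrite fxy equiv_sym; exact: (fP y).2.
have fne : forall x y E, E \in Ht -> x \in E -> y \in E -> x != y -> f x != f y.
  move=> x y E hE xE yE nxy; apply/eqP => /fE' exy.
  by rewrite (equiv_adj exy (adj_in hE xE yE)) eqxx in nxy.
have fne2 : forall x y E, E \in Ht -> x \in E -> y \in E -> x != y -> y != f x.
  move=> x y E hE xE yE nxy; apply/eqP => eyf.
  have exy : eqv Ht x y by rewrite eyf; exact: (fP x).2.
  by rewrite (equiv_adj exy (adj_in hE xE yE)) eqxx in nxy.
have fwd : forall E, E \in Ht -> f @: E \in Ht /\ #|f @: E| = 3.
  move=> E hE; have [a [b [c [ab ac bc eE]]]] := dec3 (h3t _ hE).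
  have aE : a \in E by rewrite eE !inE eqxx.
  have bE : b \in E by rewrite eE !inE eqxx orbT.
  have cE : c \in E by rewrite eE !inE eqxx !orbT.
  rewrite eE imset3; split; last first.
    by apply: card3'; apply: fne hE _ _ _.
  have hE' := hE; rewrite eE in hE'.
  apply: (rep3 h3t hE' (fP a).2 (fP b).2 (fP c).2) => //.
  - exact: fne2 hE aE bE ab.
  - exact: fne2 hE aE cE ac.
  - exact: fne2 hE bE cE bc.
split.
  move=> x y xT yT nxy.
  have : adj Ht x y.
    case/orP: (term x y) => // exy.
    by rewrite -(fT x xT) -(fU x y yT exy) eqxx in nxy.
  case/existsP => E /andP[hE /andP[xE yE]].
  exists (f @: E).
    rewrite inE (fwd E hE).1 /=; apply/subsetP => z /imsetP[w _ ->]; exact: (fP w).1.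
  by rewrite -(fT x xT) -(fT y yT) !imset_f.
exists f; split.
- by move=> x; exact: (fP x).1.
- by move=> t tT; exists t; exact: fT.
apply/setP => E; rewrite inE; apply/idP/idP.
  move=> hE; rewrite h3t // eqxx (fwd E hE).2 eqxx inE (fwd E hE).1 /=.
  apply/subsetP => z /imsetP[w _ ->]; exact: (fP w).1.
case/and3P => /eqP c3 /eqP cf; rewrite inE => /andP[hf _].
have [a [b [c [ab ac bc eE]]]] := dec3 c3.
rewrite eE imset3 in cf hf; rewrite eE.
have [fab fac fbc] := card3 cf.
have fTT : forall x, f (f x) = f x by move=> x; apply: fT; exact: (fP x).1.
have nf : forall x y, f x != f y -> f y != x.
  move=> x y n; apply/eqP => e; move: n; by rewrite -e fTT eqxx.
apply: (rep3 h3t hf); rewrite 1?equiv_sym; try exact: (fP _).2; try done.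
- exact: nf.
- exact: nf.
- exact: nf.
Qed.
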